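(* Let $X$ be a compact metric space, $T:X\to X$ a surjective local homeomorphism, $d\in\mathbb{N}$, $E\subseteq\mathbb{Z}$ finite and $\varepsilon>0$, and let $\varphi:X\to P_d(\mathbb{Z})$ be a continuous $(E,\varepsilon)$-equivariant map. Then there exist a finite set $S\subseteq\mathbb{Z}$ and a continuous $(E,\varepsilon)$-equivariant map $\varphi':X\to P_d(\mathbb{Z})$ with $\varphi'(X)\subseteq P(S)\cap P_d(\mathbb{Z})$.
   Context: $P_d(\mathbb{Z})$: probability measures on $\mathbb{Z}$ supported on at most $d+1$ points, metric $\rho(\mu,\nu)=\sum_m|\mu(m)-\nu(m)|$, action $\alpha_n(\mu)(m)=\mu(m-n)$. $P(S)$: probability measures supported in $S$. For $n\in\mathbb{Z}$, $T^n(\{x\})$ is the image under $T^n$ if $n\ge0$ and the preimage under $T^{|n|}$ if $n<0$. $\varphi$ is $(E,\varepsilon)$-equivariant if $\rho(\varphi(y),\alpha_n(\varphi(x)))<\varepsilon$ for all $n\in E$, $x\in X$, $y\in T^n(\{x\})$. *)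

(* Defs.v *)
From HB Require Import structures.
From mathcomp Require Import all_boot all_order all_algebra.
From mathcomp Require Import all_classical all_reals all_analysis.
Set Implicit Arguments. Unset Strict Implicit. Unset Printing Implicit Defensive.
Import Order.TTheory GRing.Theory Num.Theory.
Import numFieldNormedType.Exports.
Local Open Scope classical_set_scope.
Local Open Scope ring_scope.

(* A (finitely supported) probability measure on Z is represented by its mass
   function  mu : int -> R. *)

Definition in_Pd {R : realType} (d : nat) (mu : int -> R) : Prop :=
  (forall m, 0 <= mu m) /\
  exists s : seq int, [/\ uniq s, (size s <= d.+1)%N,
                         (forall m, m \notin s -> mu m = 0) &
                         \sum_(m <- s) mu m = 1].

Definition supported_in {R : realType} (S : seq int) (mu : int -> R) : Prop :=
  forall m, m \notin S -> mu m = 0.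

Definition rho {R : realType} (mu nu : int -> R) : \bar R :=
  (\esum_(m in [set: int]) (`|mu m - nu m|)%:E)%R.

Definition alpha {R : realType} (n : int) (mu : int -> R) : int -> R :=
  fun m => mu (m - n).

(* y ∈ T^n({x}) : image under T^n if n >= 0, preimage under T^|n| if n < 0 *)
Definition Tn_rel {X : Type} (T : X -> X) (n : int) (x y : X) : Prop :=
  if (0 <= n) then y = iter `|n|%N T x else iter `|n|%N T y = x.

Definition equivariant {R : realType} {X : Type} (T : X -> X)
  (E : seq int) (eps : R) (phi : X -> int -> R) : Prop :=
  forall n, n \in E -> forall x y, Tn_rel T n x y ->
    (rho (phi y) (alpha n (phi x)) < eps%:E)%E.

Definition rho_continuous {R : realType} {X : topologicalType}
  (phi : X -> int -> R) : Prop :=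
  forall x (e : R), 0 < e -> \forall y \near x, (rho (phi x) (phi y) < e%:E)%E.

(* T is a local homeomorphism: every point has an open neighbourhood U such that
   T(U) is open and T restricted to U is a homeomorphism onto T(U)
   (i.e. continuous, injective, and mapping open subsets of U to open sets). *)
Definition local_homeo {X : topologicalType} (T : X -> X) : Prop :=
  forall x, exists U : set X,
    [/\ open U, U x, open (T @` U), {within U, continuous T} &
        {in U &, injective T} /\
        (forall V, V `<=` U -> open V -> open (T @` V))].

(* Main.v *)
Require Import Defs.
From HB Require Import structures.
From mathcomp Require Import all_boot all_order all_algebra.
From mathcomp Require Import all_classical all_reals all_analysis.
From mathcomp Require Import ring lra.
Import Order.TTheory GRing.Theory Num.Theory.
Local Open Scope classical_set_scope.
Local Open Scope ring_scope.

Section Aux.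
Variable R : realType.
Implicit Types (mu nu : int -> R) (s t : seq int).

Lemma sum_filter_perm s t (f : int -> R) : uniq s -> uniq t -> {subset s <= t} ->
  \sum_(m <- t | m \in s) f m = \sum_(m <- s) f m.
Proof.
move=> us ut st; rewrite -big_filter; apply: perm_big; apply: uniq_perm.
- exact: seq.filter_uniq.
- exact: us.
move=> m; rewrite mem_filter; case: (boolP (m \in s)) => //= ms.
exact: st.
Qed.

Lemma sum_sub_supp s t (f : int -> R) : uniq s -> uniq t -> {subset s <= t} ->
  (forall m, m \in t -> m \notin s -> f m = 0) ->
  \sum_(m <- t) f m = \sum_(m <- s) f m.
Proof.
move=> us ut st f0; rewrite (bigID (fun m => m \in s)) /=.
rewrite [X in _ + X]big_seq_cond [X in _ + X]big1 ?addr0; last first.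
  by move=> m /andP[mt ms]; exact: f0.
exact: sum_filter_perm.
Qed.

Lemma sum_sub_le s t (f : int -> R) : uniq s -> uniq t -> {subset s <= t} ->
  (forall m, m \in t -> 0 <= f m) ->
  \sum_(m <- s) f m <= \sum_(m <- t) f m.
Proof.
move=> us ut st f0; rewrite [leRHS](bigID (fun m => m \in s)) /=.
rewrite sum_filter_perm // lerDl big_seq_cond sumr_ge0 //.
by move=> m /andP[mt _]; exact: f0.
Qed.

Definition rhoR t mu nu := \sum_(m <- t) `|mu m - nu m|.

Lemma rho_ge0 mu nu : (0 <= rho mu nu)%E.
Proof. by apply: esum_ge0 => m _; rewrite lee_fin. Qed.

Lemma rho_fin t mu nu : uniq t -> (forall m, m \notin t -> mu m = nu m) ->
  rho mu nu = (rhoR t mu nu)%:E.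
Proof.
move=> ut e; rewrite /rho (esumID [set` t]); last by move=> *; rewrite lee_fin.
rewrite [X in (_ + X)%E]esum1 ?adde0; last first.
  by move=> m [_ /= mt]; rewrite e ?subrr ?normr0 //; apply/negP.
rewrite setTI esum_fset; try exact: finite_seq; try by move=> *; rewrite lee_fin.
by rewrite -fsbig_seq // sumEFin.
Qed.

Lemma rho_ge t mu nu : uniq t -> ((rhoR t mu nu)%:E <= rho mu nu)%E.
Proof.
move=> ut; rewrite /rho (esumID [set` t]); last by move=> *; rewrite lee_fin.
rewrite setTI esum_fset; try exact: finite_seq; try by move=> *; rewrite lee_fin.
rewrite -fsbig_seq // sumEFin leeDl //.
by apply: esum_ge0 => m _; rewrite lee_fin.
Qed.

Lemma rho_sym mu nu : rho mu nu = rho nu mu.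
Proof.
rewrite /rho; congr esum; apply: funext => m; by rewrite distrC.
Qed.

Lemma rho_tri (a b c : int -> R) : (rho a c <= rho a b + rho b c)%E.
Proof.
rewrite /rho -esumD; last 2 first.
- by move=> *; rewrite lee_fin.
- by move=> *; rewrite lee_fin.
by apply: le_esum => m _; rewrite -EFinD lee_fin ler_distD.
Qed.

Lemma rho_alpha n mu nu : rho (alpha n mu) (alpha n nu) = rho mu nu.
Proof.
rewrite /rho (@reindex_esum R _ _ setT setT (fun m => m + n)).
  by apply: eq_esum => m _; rewrite /alpha addrK.
rewrite setTT_bijective; exists (fun m => m - n) => m; [exact: addrK|exact: subrK].
Qed.

Lemma rho_real mu nu c : (rho mu nu < c%:E)%E -> rho mu nu = (fine (rho mu nu))%:E.
Proof.
move=> h; rewrite fineK // ge0_fin_numE ?rho_ge0 //.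
exact: (lt_trans h (ltry _)).
Qed.

End Aux.
Arguments rho_real {R mu nu c} _.
Arguments rho_ge {R} t mu nu _.
Arguments rho_fin {R} t mu nu _ _.
Arguments rho_tri {R} a b c.
Arguments rho_sym {R} mu nu.
Arguments rho_alpha {R} n mu nu.
Arguments rho_ge0 {R} mu nu.
Arguments sum_filter_perm {R} s t f _ _ _.
Arguments sum_sub_supp {R} s t f _ _ _ _.
Arguments sum_sub_le {R} s t f _ _ _ _.
Arguments rhoR {R} t mu nu.
Lemma rho_realle {R : realType} (mu nu : int -> R) c :
  (rho mu nu <= c%:E)%E -> rho mu nu = (fine (rho mu nu))%:E.
Proof.
move=> h; apply: (@rho_real R mu nu (c + 1)); apply: (le_lt_trans h).
by rewrite lte_fin ltrDl.
Qed.

Section Top.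
Variable R : realType.

Lemma slack (X : topologicalType) (phi : X -> int -> R) (a b : X -> X) n (eps : R) :
  compact [set: X] -> continuous a -> continuous b -> rho_continuous phi ->
  (forall z, (rho (phi (b z)) (alpha n (phi (a z))) < eps%:E)%E) ->
  exists2 et, 0 < et & forall z,
    (rho (phi (b z)) (alpha n (phi (a z))) < (eps - et)%:E)%E.
Proof.
move=> /compact_near_coveringP cov ca cb cphi h.
pose P := fun (et : R) (z : X) =>
  (rho (phi (b z)) (alpha n (phi (a z))) < (eps - et)%:E)%E.
have : \forall et \near 0^'+, [set: X] `<=` P et.
  apply: (cov R (0^'+) P) => x _.
  have er := rho_real (h x).
  set r := fine _ in er.
  have rlt : r < eps by rewrite -lte_fin -er.
  pose g := (eps - r) / 3.
  have g0 : 0 < g by rewrite /g; lra.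
  exists ([set z | (rho (phi (a x)) (phi (a z)) < g%:E)%E /\
                   (rho (phi (b x)) (phi (b z)) < g%:E)%E], [set et | et < g]).
    split; last exact: nbhs_right_lt.
    have H1 : nbhs x [set z | (rho (phi (a x)) (phi (a z)) < g%:E)%E].
      exact: (ca x _ (cphi (a x) g g0)).
    have H2 : nbhs x [set z | (rho (phi (b x)) (phi (b z)) < g%:E)%E].
      exact: (cb x _ (cphi (b x) g g0)).
    rewrite /=; apply: filterS (filterI H1 H2).
    by move=> z [].
  case=> z et /= [[h1 h2] hg].
  rewrite rho_sym in h2.
  have t1 := rho_tri (phi (b z)) (phi (b x)) (alpha n (phi (a z))).
  have t2 := rho_tri (phi (b x)) (alpha n (phi (a x))) (alpha n (phi (a z))).
  rewrite rho_alpha in t2.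
  have e1 := rho_real h1; have e2 := rho_real h2.
  rewrite e1 in h1 t2; rewrite e2 in h2 t1; rewrite er in t2.
  rewrite /P; apply: (le_lt_trans t1); apply: (le_lt_trans (leeD2l _ t2)).
  rewrite -!EFinD lte_fin; rewrite !lte_fin in h1 h2; rewrite /g in hg h1 h2; lra.
move=> H.
have [et [et0 Het]] := filter_ex (filterI (nbhs_right_gt 0) H).
by exists et => // z; exact: (Het z I).
Qed.

Lemma tight (X : topologicalType) (phi : X -> int -> R) d (δ : R) :
  compact [set: X] -> 0 < δ -> (forall x, in_Pd d (phi x)) -> rho_continuous phi ->
  exists S : seq int, uniq S /\ forall z, 1 - δ < \sum_(m <- S) phi z m.
Proof.
move=> /compact_near_coveringP cov δ0 Pd cphi.
pose F := filter_from [set: seq int] (fun s => [set S : seq int | {subset s <= S}]).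
have FF : Filter F.
  apply: filter_from_filter; first by exists [::].
  move=> i j _ _; exists (i ++ j) => // S /= hS.
  by split => m mi; apply: hS; rewrite mem_cat mi ?orbT.
pose P := fun (S : seq int) z => 1 - δ < \sum_(m <- undup S) phi z m.
have := cov (seq int) F P FF.
case.
  move=> x _; have [ph0 [s [us ss s0 s1]]] := Pd x.
  exists ([set z | (rho (phi x) (phi z) < δ%:E)%E], [set S : seq int | {subset s <= S}]).
    by split; [exact: cphi | exists s].
  case=> z S /= [hz hS].
  have [pz0 [sz [usz _ sz0 sz1]]] := Pd z.
  rewrite /P; set S' := undup S.
  have hsub : {subset s <= S'} by move=> m /hS; rewrite mem_undup.
  rewrite -sz1 (bigID (fun m => m \in S')) /=.
  have A : \sum_(m <- sz | m \in S') phi z m <= \sum_(m <- S') phi z m.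
    rewrite -big_filter; apply: sum_sub_le => //.
    - exact: seq.filter_uniq.
    - exact: undup_uniq.
    - by move=> m; rewrite mem_filter => /andP[].
  have B : \sum_(m <- sz | m \notin S') phi z m <= rhoR sz (phi x) (phi z).
    rewrite /rhoR [leRHS](bigID (fun m => m \in S')) /= -[leLHS]add0r.
    apply: lerD; first by apply: sumr_ge0 => *.
    apply: ler_sum => m mS; rewrite s0; last exact: (contra (@hsub m) mS).
    by rewrite sub0r normrN ger0_norm.
  have C := le_lt_trans (rho_ge sz (phi x) (phi z) usz) hz.
  rewrite lte_fin in C.
  lra.
move=> s _ hs.
exists (undup s); split; first exact: undup_uniq.
by move=> z; exact: (hs s (fun m h => h) z I).
Qed.

Lemma iter_cont (X : topologicalType) (T : X -> X) k :
  continuous T -> continuous (iter k T).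
Proof.
move=> cT; elim: k => [|k IH] x /=; first exact: cvg_id.
exact: (@continuous_comp _ _ _ (iter k T) T x (IH x) (cT _)).
Qed.

End Top.

Section Nrm.
Variable R : realType.
Implicit Types (mu nu : int -> R) (S : seq int).

Definition csum S mu := \sum_(m <- S) mu m.
Definition nrm S mu : int -> R := fun m => if m \in S then mu m / csum S mu else 0.

Lemma csum_le1 {d S mu} : in_Pd d mu -> uniq S -> csum S mu <= 1.
Proof.
move=> [mu0 [s [us _ s0 s1]]] uS.
pose t := undup (S ++ s).
have ut : uniq t by exact: undup_uniq.
rewrite /csum (le_trans (sum_sub_le S t mu uS ut _ _)) //.
- by move=> m mS; rewrite mem_undup mem_cat mS.
- rewrite (sum_sub_supp s t) ?s1 //.
    by move=> m ms; rewrite mem_undup mem_cat ms orbT.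
  by move=> m _ /s0.
Qed.

Lemma nrm_Pd d S mu : in_Pd d mu -> uniq S -> 0 < csum S mu ->
  in_Pd d (nrm S mu) /\ supported_in S (nrm S mu).
Proof.
move=> [mu0 [s [us ss s0 s1]]] uS c0; split; last first.
  by move=> m mS; rewrite /nrm (negbTE mS).
split.
  move=> m; rewrite /nrm; case: ifP => // _.
  by rewrite divr_ge0 // ltW.
exists (seq.filter (fun m => m \in S) s); split.
- exact: seq.filter_uniq.
- by rewrite size_filter (leq_trans (count_size _ _)).
- move=> m; rewrite mem_filter /nrm; case: ifP => //= mS ms.
  by rewrite s0 ?mul0r.
rewrite big_filter big_mkcond /=.
rewrite (eq_bigr (fun m => if m \in S then mu m / csum S mu else 0)); last first.
  by move=> m _; rewrite /nrm; case: (m \in S).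
rewrite -big_mkcond /= -mulr_suml.
suff -> : \sum_(i <- s | i \in S) mu i = csum S mu by rewrite mulfV // gt_eqF.
rewrite /csum [RHS](bigID (fun m => m \in s)) /=.
rewrite [X in _ = _ + X]big1 ?addr0; last by move=> m /s0.
rewrite -big_filter -[RHS]big_filter; apply: perm_big; apply: uniq_perm.
- exact: seq.filter_uniq.
- exact: seq.filter_uniq.
by move=> m; rewrite !mem_filter andbC.
Qed.

Lemma nrm_close d S mu : in_Pd d mu -> uniq S -> 0 < csum S mu ->
  (rho mu (nrm S mu) <= (2 * (1 - csum S mu))%:E)%E.
Proof.
move=> Pmu uS c0; have c1 := csum_le1 Pmu uS.
case: Pmu => [mu0 [s [us ss s0 s1]]].
pose t := undup (S ++ s).
have ut : uniq t by exact: undup_uniq.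
have St : {subset S <= t} by move=> m mS; rewrite mem_undup mem_cat mS.
have st : {subset s <= t} by move=> m ms; rewrite mem_undup mem_cat ms orbT.
rewrite (rho_fin t); last 2 first.
- exact: ut.
- move=> m mt; rewrite /nrm; case: ifP => mS.
    by move: mt; rewrite mem_undup mem_cat mS.
  apply: s0; apply: contra mt; exact: st.
rewrite lee_fin /rhoR (bigID (fun m => m \in S)) /=.
set c := csum S mu.
have tot : \sum_(m <- t) mu m = 1 by rewrite (sum_sub_supp s t) // => m _ /s0.
have inS : \sum_(m <- t | m \in S) mu m = c by rewrite sum_filter_perm.
have e1 : \sum_(m <- t | m \in S) `|mu m - nrm S mu m| = 1 - c.
  rewrite (eq_bigr (fun m => mu m * (c^-1 - 1))); last first.
    move=> m mS; rewrite /nrm mS.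
    have -> : mu m - mu m / c = mu m * (1 - c^-1) by rewrite mulrBr mulr1.
    rewrite normrM ger0_norm // ler0_norm; first by rewrite opprB.
    by rewrite subr_le0 invr_ge1 // unitfE gt_eqF.
  by rewrite -mulr_suml inS mulrBr mulfV ?gt_eqF // mulr1.
have e2 : \sum_(m <- t | m \notin S) `|mu m - nrm S mu m| = 1 - c.
  rewrite (eq_bigr (fun m => mu m)); last first.
    by move=> m mS; rewrite /nrm (negbTE mS) subr0 ger0_norm.
  by move: tot; rewrite (bigID (fun m => m \in S)) /= inS; lra.
rewrite e1 e2; lra.
Qed.

Lemma pt_bound (a b c c' : R) : 0 < c -> 0 < c' -> 0 <= b ->
  `|a / c - b / c'| <= `|a - b| / c + b * (`|c' - c| / (c * c')).
Proof.
move=> c0 c'0 b0.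
have -> : a / c - b / c' = (a - b) / c + b * ((c' - c) / (c * c')).
  by field; rewrite !gt_eqF.
apply: le_trans (ler_normD _ _) _.
rewrite !normrM !normfV (gtr0_norm c0) (ger0_norm b0) normrM (gtr0_norm c0) (gtr0_norm c'0).
by [].
Qed.

Lemma nrm_cont S mu nu : uniq S -> 0 < csum S mu -> 0 < csum S nu ->
  (forall m, 0 <= nu m) ->
  (rho (nrm S mu) (nrm S nu) <= (2 * rhoR S mu nu / csum S mu)%:E)%E.
Proof.
move=> uS c0 c'0 nu0.
rewrite (rho_fin S) //; last by move=> m mS; rewrite /nrm (negbTE mS).
rewrite lee_fin /rhoR.
set c := csum S mu; set c' := csum S nu; set D := \sum_(m <- S) `|mu m - nu m|.
rewrite big_seq (eq_bigr (fun m => `|mu m / c - nu m / c'|)); last first.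
  by move=> m mS; rewrite /nrm mS.
rewrite -big_seq.
apply: le_trans (ler_sum _ (fun m _ => pt_bound (mu m) (nu m) c c' c0 c'0 (nu0 m))) _.
rewrite big_split /= -!mulr_suml.
have hc : `|c' - c| <= D.
  rewrite /c /c' /D -sumrB; apply: le_trans (ler_norm_sum _ _ _) _.
  by apply: ler_sum => m _; rewrite distrC.
have -> : c' * (`|c' - c| / (c * c')) = `|c' - c| / c.
  by field; rewrite !gt_eqF.
rewrite -mulrDl ler_pM2r ?invr_gt0 // -/D; lra.
Qed.

End Nrm.
Arguments csum {R} S mu.
Arguments nrm {R} S mu _.
Arguments nrm_Pd {R d S mu}.
Arguments nrm_close {R d S mu}.
Arguments nrm_cont {R S mu nu}.


Lemma combine {R : realType} (E : seq int) (Q : int -> R -> Prop) :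
  (forall n et et', 0 < et' -> et' <= et -> Q n et -> Q n et') ->
  (forall n, n \in E -> exists2 et, 0 < et & Q n et) ->
  exists2 et, 0 < et & forall n, n \in E -> Q n et.
Proof.
move=> mono; elim: E => [|n E IH] h; first by exists 1.
have [e1 e10 H1] := h n (mem_head _ _).
have [e2 e20 H2] : exists2 et, 0 < et & forall k, k \in E -> Q k et.
  by apply: IH => k kE; apply: h; rewrite inE kE orbT.
have m0 : 0 < Num.min e1 e2 by rewrite lt_min e10 e20.
exists (Num.min e1 e2) => // k; rewrite inE => /orP[/eqP->|kE].
  by apply: mono _ _ _ m0 _ H1; rewrite ge_min lexx.
by apply: mono _ _ _ m0 _ (H2 k kE); rewrite ge_min lexx orbT.
Qed.

Theorem lemma5p8 (R : realType) (X : metricType R) (T : X -> X)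
  (d : nat) (E : seq int) (eps : R) (phi : X -> int -> R) :
  compact [set: X] ->
  (forall y : X, exists x : X, T x = y) ->
  local_homeo T ->
  0 < eps ->
  (forall x, in_Pd d (phi x)) ->
  rho_continuous phi ->
  equivariant T E eps phi ->
  exists (S : seq int) (phi' : X -> int -> R),
    [/\ (forall x, in_Pd d (phi' x) /\ supported_in S (phi' x)),
        rho_continuous phi' &
        equivariant T E eps phi'].
Proof.
move=> cpt _ lh eps0 Pd cphi eqv.
have cT : continuous T.
  move=> x; have [U [oU Ux _ wc _]] := lh x.
  by move: wc; rewrite continuous_open_subspace // => /(_ x (mem_set Ux)).
pose Q := fun n (et : R) => forall x y, Tn_rel T n x y ->
  (rho (phi y) (alpha n (phi x)) < (eps - et)%:E)%E.
have [et et0 HQ] : exists2 et, 0 < et & forall n, n \in E -> Q n et.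
  apply: combine.
    move=> n e e' e'0 le Qe x y hxy; apply: (lt_le_trans (Qe x y hxy)).
    by rewrite lee_fin lerD2l lerN2.
  move=> n nE; have ci : continuous (iter `|n|%N T) by apply: iter_cont.
  case: (boolP (0 <= n)) => n0.
    have [e e0 H] := @slack R X phi id (iter `|n|%N T) n eps cpt (fun x => cvg_id)
      ci cphi (fun z => eqv n nE z _ (ltac:(by rewrite /Tn_rel n0))).
    by exists e => // x y; rewrite /Tn_rel n0 => ->; exact: H.
  have [e e0 H] := @slack R X phi (iter `|n|%N T) id n eps cpt
      ci (fun x => cvg_id) cphi
      (fun z => eqv n nE _ z (ltac:(by rewrite /Tn_rel (negbTE n0)))).
  by exists e => // x y; rewrite /Tn_rel (negbTE n0) => <-; exact: H.
pose δ := Num.min (et / 4) (1 / 2).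
have δ0 : 0 < δ by rewrite lt_min; apply/andP; split; lra.
have δ1 : δ <= et / 4 by rewrite ge_min lexx.
have δ2 : δ <= 1 / 2 by rewrite ge_min lexx orbT.
have [S [uS hS]] := @tight R X phi d δ cpt δ0 Pd cphi.
have c0 : forall z, 0 < csum S (phi z).
  by move=> z; have := hS z; rewrite /csum; lra.
exists S, (fun z => nrm S (phi z)); split.
- by move=> x; exact: nrm_Pd (Pd x) uS (c0 x).
- move=> x e e0.
  have ec0 : 0 < e * csum S (phi x) / 2 by have := c0 x; nra.
  apply: filterS (cphi x _ ec0) => y hy.
  have h1 := nrm_cont uS (c0 x) (c0 y) (Pd y).1.
  have h2 := le_lt_trans (rho_ge S (phi x) (phi y) uS) hy.
  rewrite lte_fin in h2.
  apply: (le_lt_trans h1); rewrite lte_fin ltr_pdivrMr ?c0 //.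
  have := c0 x; nra.
- move=> n nE x y hxy.
  have hm := HQ n nE x y hxy.
  have t1 := rho_tri (nrm S (phi y)) (phi y) (alpha n (nrm S (phi x))).
  have t2 := rho_tri (phi y) (alpha n (phi x)) (alpha n (nrm S (phi x))).
  rewrite rho_alpha in t2; rewrite (rho_sym (nrm S (phi y)) (phi y)) in t1.
  have hy := nrm_close (Pd y) uS (c0 y).
  have hx := nrm_close (Pd x) uS (c0 x).
  have ey := rho_realle _ _ _ hy; have ex := rho_realle _ _ _ hx; have em := rho_real hm.
  rewrite ey in hy t1; rewrite ex in hx t2; rewrite em in hm t2.
  apply: (le_lt_trans t1); apply: (le_lt_trans (leeD2l _ t2)).
  rewrite -!EFinD lte_fin; rewrite !lee_fin in hx hy; rewrite lte_fin in hm.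
  have := hS x; have := hS y; rewrite /csum in hx hy *; lra.
Qed.
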